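(* Let $n\ge4$ be even. The map $\rho:\mathcal F_{n-2}\to Y_1$, $z\mapsto w_0zs_{n-1}w_0$, is an order-preserving one-to-one mapping (onto $Y_1$) with respect to the Bruhat orders.
   Context: $s_i=(i,i+1)$; permutations compose right to left. For even $m$, $\mathcal F_m$ is the set of fixed-point-free involutions of $S_m$ with conjugation action and height $\ell/2$; its Bruhat order is the weakest partial order with $z\le tzt$ for transpositions $t$ with $\ell(z)\le\ell(tzt)$. Regard $\mathcal F_{n-2}\subset S_n$ (fixing $n-1,n$); $w_0$ is the longest element of $S_n$; $Y_1=\rho(\mathcal F_{n-2})\subseteq\mathcal F_n$, with the Bruhat order of $\mathcal F_n$ restricted. *)

(* Defs.v *)
From mathcomp Require Import all_boot all_order all_fingroup.
From Stdlib Require Import Relations.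
Set Implicit Arguments. Unset Strict Implicit. Unset Printing Implicit Defensive.

(* Permutations of {1..m} are 'S_m = {perm 'I_m} (0-indexed: point i+1 of the
   paper is the ordinal i).  MathComp composes left to right:
   (s * t) x = t (s x); so the paper's right-to-left product u v is v * u. *)

Definition len m (s : 'S_m) : nat :=
  #|[set p : 'I_m * 'I_m | (p.1 < p.2) && (s p.2 < s p.1)]|.

Definition fpf m (z : 'S_m) : bool := [forall i, (z (z i) == i) && (z i != i)].

Definition bstep m (z z' : 'S_m) : Prop :=
  exists i j : 'I_m, i != j /\ z' = (tperm i j * z * tperm i j)%g /\ len z <= len z'.

Definition fbruhat m (z z' : 'S_m) : Prop :=
  [/\ fpf z, fpf z' & clos_refl_trans _ (fun a b => fpf a /\ bstep a b) z z'].

(* embedding S_{n-2} -> S_n fixing the last two points n-1, n *)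
Definition ext_fun n (z : 'S_(n - 2)) (x : 'I_n) : 'I_n :=
  if insub (val x) is Some y then widen_ord (leq_subr 2 n) (z y) else x.

Lemma ext_fun_inj n (z : 'S_(n - 2)) : injective (ext_fun z).
Proof.
move=> x1 x2; rewrite /ext_fun.
case: insubP => [y1 lt1 v1|ge1]; case: insubP => [y2 lt2 v2|ge2] //.
- move/(congr1 val)=> /= /val_inj /perm_inj e.
  by apply/val_inj; rewrite -v1 -v2 e.
- by move=> e; move: ge2; rewrite -e /= ltn_ord.
- by move=> e; move: ge1; rewrite e /= ltn_ord.
Qed.

Definition ext n (z : 'S_(n - 2)) : 'S_n := perm (@ext_fun_inj n z).

Definition w0 n : 'S_n := perm (@rev_ord_inj n).

(* s_{n-1} = (n-1, n), i.e. the transposition of ordinals n-2 and n-1 *)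
Definition s_last n : 'S_n :=
  match n return 'S_n with
  | 0 => 1%g
  | k.+1 => tperm (inord k.-1 : 'I_k.+1) ord_max
  end.

(* rho(z) = w0 z s_{n-1} w0 (right-to-left composition) *)
Definition rho n (z : 'S_(n - 2)) : 'S_n := (w0 n * s_last n * ext z * w0 n)%g.

Definition Y1 n (y : 'S_n) : Prop := exists2 z : 'S_(n - 2), fpf z & y = rho z.

(* Main.v *)
Require Import Defs.
From mathcomp Require Import all_boot all_order all_fingroup.
From mathcomp Require Import zify.
From Stdlib Require Import Relations.
Set Implicit Arguments. Unset Strict Implicit. Unset Printing Implicit Defensive.

Local Open Scope group_scope.

Lemma wid_inj n : injective (widen_ord (leq_subr 2 n)).
Proof. by move=> x y /(congr1 val) /= /val_inj. Qed.

Lemma ext_wid n (z : 'S_(n - 2)) y :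
  ext z (widen_ord (leq_subr 2 n) y) = widen_ord (leq_subr 2 n) (z y).
Proof. by rewrite permE /ext_fun /= valK. Qed.

Lemma ext_ge n (z : 'S_(n - 2)) (x : 'I_n) : n - 2 <= val x -> ext z x = x.
Proof. by move=> h; rewrite permE /ext_fun insubF // ltnNge h. Qed.

Lemma ord_split n (x : 'I_n) :
  (exists y, x = widen_ord (leq_subr 2 n) y) \/ n - 2 <= val x.
Proof.
case: (ltnP (val x) (n - 2)) => h; last by right.
by left; exists (Ordinal h); exact: val_inj.
Qed.

Lemma ext_morph n (z1 z2 : 'S_(n - 2)) : ext (z1 * z2) = ext z1 * ext z2.
Proof.
apply/permP => x; rewrite permM.
case: (ord_split x) => [[y ->]|h]; first by rewrite !ext_wid permM.
by rewrite !ext_ge.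
Qed.

Lemma ext_inj n (z1 z2 : 'S_(n - 2)) : ext z1 = ext z2 -> z1 = z2.
Proof.
move=> e; apply/permP => y; apply: (@wid_inj n).
by rewrite -!ext_wid e.
Qed.

Lemma inj_tperm (T U : finType) (f : T -> U) (i j y : T) :
  injective f -> f (tperm i j y) = tperm (f i) (f j) (f y).
Proof.
move=> inj; case: tpermP => [->|->|/eqP hi /eqP hj]; rewrite ?tpermL ?tpermR //.
by rewrite tpermD // (inj_eq inj) eq_sym.
Qed.

Lemma wid_neq n (a : 'I_n) (y : 'I_(n - 2)) : n - 2 <= val a ->
  a != widen_ord (leq_subr 2 n) y.
Proof.
move=> h; apply/eqP => e; move: h; by rewrite e /= leqNgt ltn_ord.
Qed.

Lemma ext_tperm n (i j : 'I_(n - 2)) :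
  ext (tperm i j) = tperm (widen_ord (leq_subr 2 n) i) (widen_ord (leq_subr 2 n) j).
Proof.
apply/permP => x; case: (ord_split x) => [[y ->]|h].
  by rewrite ext_wid (inj_tperm _ _ _ (@wid_inj n)).
by rewrite ext_ge // tpermD // eq_sym wid_neq.
Qed.

Lemma tperm_ge n (a b x : 'I_n) : n - 2 <= val a -> n - 2 <= val b ->
  n - 2 <= val x -> n - 2 <= val (tperm a b x).
Proof. by move=> ha hb hx; case: tpermP. Qed.

Lemma s_ext_comm n (a b : 'I_n) (z : 'S_(n - 2)) : n - 2 <= val a -> n - 2 <= val b ->
  tperm a b * ext z = ext z * tperm a b.
Proof.
move=> ha hb; apply/permP => x; rewrite !permM.
case: (ord_split x) => [[y ->]|h].
  by rewrite ext_wid !tpermD // ?wid_neq // ext_wid.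
by rewrite [ext z (tperm _ _ _)]ext_ge ?tperm_ge // ext_ge.
Qed.

Lemma s_lastE n : 2 <= n ->
  exists a b : 'I_n, [/\ val a = n - 2, val b = n.-1 & s_last n = tperm a b].
Proof.
case: n => [|k] //= h; exists (inord k.-1), ord_max; split => //=.
rewrite inordK; lia.
Qed.

Lemma w0E n x : w0 n x = rev_ord x. Proof. by rewrite permE. Qed.
Lemma w0K n : involutive (w0 n). Proof. by move=> x; rewrite !w0E rev_ordK. Qed.
Arguments w0K : clear implicits.
Lemma w0V n : (w0 n)^-1 = w0 n.
Proof. by apply/permP => x; rewrite -{1}(w0K n x) permK. Qed.
Lemma conjw0E n (x : 'S_n) y : (x ^ w0 n) y = w0 n (x (w0 n y)).
Proof. by rewrite conjgE !permM w0V. Qed.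

Lemma rev_lt n (i j : 'I_n) : (rev_ord i < rev_ord j) = (j < i).
Proof. by apply/idP/idP; have := ltn_ord i; have := ltn_ord j; rewrite /=; lia. Qed.

Lemma len_w0 n (x : 'S_n) : len (x ^ w0 n) = len x.
Proof.
rewrite /len.
pose f := fun p : 'I_n * 'I_n => (w0 n p.2, w0 n p.1).
have fK : involutive f by case=> a b; rewrite /f /= !w0K.
set S := [set p | _ & x _ < x _].
have -> : [set p : 'I_n * 'I_n | (p.1 < p.2) && ((x ^ w0 n)%g p.2 < (x ^ w0 n)%g p.1)] = f @^-1: S.
  apply/setP => [[a b]]; rewrite !inE /= !conjw0E !w0E !rev_lt.
  by [].
by rewrite -(can2_imset_pre S fK fK) card_imset //; exact: inv_inj.
Qed.

Lemma fpf_conj n (z : 'S_n) : fpf z -> fpf (z ^ w0 n).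
Proof.
move/forallP => H; apply/forallP => x; have /andP[/eqP h1 h2] := H (w0 n x).
rewrite !conjw0E w0K h1 w0K eqxx /=.
by rewrite -{2}(w0K n x) (inj_eq (inv_inj (w0K n))).
Qed.

Lemma valo m (x : 'I_m) : \val x = nat_of_ord x. Proof. by []. Qed.
Ltac vlia := (repeat match goal with H : context[\val _] |- _ => rewrite valo in H end); rewrite ?valo; lia.

Lemma vlt m (x : 'I_m) : val x < m. Proof. exact: ltn_ord. Qed.

Section U.
Variables (n : nat) (a b : 'I_n) (z : 'S_(n - 2)).
Hypotheses (hn : 2 <= n) (ha : val a = n - 2) (hb : val b = n.-1).
Local Notation wid := (widen_ord (leq_subr 2 n)).
Local Notation u := (tperm a b * ext z).

Lemma u_wid y : u (wid y) = wid (z y).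
Proof. by rewrite permM tpermD ?ext_wid // ?wid_neq ?ha ?hb //; vlia. Qed.

Lemma u_ge x : n - 2 <= val x -> val (u x) + val x = n - 2 + n.-1.
Proof.
move=> h; rewrite permM ext_ge ?tperm_ge ?ha ?hb //; try vlia.
case: tpermP => [->|->|hxa hxb]; rewrite ?ha ?hb; try vlia.
have : val x <> val a by move=> e; apply: hxa; exact: val_inj.
have : val x <> val b by move=> e; apply: hxb; exact: val_inj.
have ha2 : (a : nat) = n - 2 := ha; have hb2 : (b : nat) = n.-1 := hb.
move: h; case: x {hxa hxb} => v hv /=; vlia.
Qed.

Lemma u_val x : (val x < n - 2 /\ val (u x) < n - 2) \/
   (n - 2 <= val x /\ val (u x) + val x = n - 2 + n.-1).
Proof.
case: (ord_split x) => [[y ->]|h]; last by right; split => //; exact: u_ge.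
by left; rewrite u_wid /= !vlt.
Qed.

Lemma fpf_u : fpf z -> fpf u.
Proof.
move/forallP => H; apply/forallP => x.
case: (ord_split x) => [[y ->]|h].
  have /andP[/eqP h1 h2] := H y.
  by rewrite !u_wid h1 eqxx (inj_eq (@wid_inj n)).
have h1 := u_ge h.
have h2 : n - 2 <= val (u x) by rewrite permM ext_ge ?tperm_ge ?ha ?hb //; vlia.
have h3 := u_ge h2.
apply/andP; split; apply/eqP.
  by apply: val_inj; apply/eqP; rewrite -(eqn_add2r (val (u x))) h3 -h1 [X in _ == X]addnC.
by move=> e; move: h1; rewrite e; vlia.
Qed.

Lemma len_u : len u = (len z).+1.
Proof.
rewrite /len.
pose f := fun p : 'I_(n - 2) * 'I_(n - 2) => (wid p.1, wid p.2).
have finj : injective f.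
  by move=> [p1 p2] [q1 q2] [/val_inj -> /val_inj ->].
set S := [set p | _ & z _ < z _].
have imf : forall p, p \in f @: S -> (val p.1 < n - 2) && (val p.2 < n - 2).
  by move=> p /imsetP [[q1 q2] _ ->] /=; rewrite !vlt.
have -> : [set p : 'I_n * 'I_n | (p.1 < p.2) && (u p.2 < u p.1)] = (a, b) |: f @: S.
  apply/setP => [[p1 p2]]; rewrite !inE /=.
  case: (ltnP (val p1) (n - 2)) => h1; case: (ltnP (val p2) (n - 2)) => h2.
  - pose y1 := Ordinal h1; pose y2 := Ordinal h2.
    have e1 : p1 = wid y1 by exact: val_inj.
    have e2 : p2 = wid y2 by exact: val_inj.
    rewrite e1 e2 -[(wid y1, wid y2) \in _]/(f (y1, y2) \in _) mem_imset // inE /= !u_wid /= xpair_eqE.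
    have -> : (wid y1 == a) = false.
      by apply/negbTE; rewrite eq_sym wid_neq ?ha.
    by [].
  1-3: have -> : ((p1, p2) \in f @: S) = false by apply/negbTE; apply/negP => /imf /= /andP [hh1 hh2]; move: h1 h2 hh1 hh2; rewrite ?valo; lia.
  1-3: rewrite orbF xpair_eqE -[p1 == a]val_eqE -[p2 == b]val_eqE ha hb.
  1-3: apply/idP/idP => HH; have := u_val p1; have := u_val p2; have := vlt p1; have := vlt p2; move: HH.
  1-6: move: h1 h2; rewrite ?valo; move: (nat_of_ord (u p1)) (nat_of_ord (u p2)) (nat_of_ord p1) (nat_of_ord p2) => v1 v2 w1 w2; try lia.
rewrite cardsU1 card_imset //.
have -> : (a, b) \notin f @: S by apply/negP => /imf /= /andP [hh _]; move: hh; rewrite ha ltnn.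
by [].
Qed.
End U.

Lemma rhoE n (a b : 'I_n) (z : 'S_(n - 2)) : s_last n = tperm a b ->
  rho z = (tperm a b * ext z) ^ w0 n.
Proof. by move=> e; rewrite /rho e conjgE w0V !mulgA. Qed.

Theorem proposition3p2 (n : nat) (hn : 4 <= n) (he : ~~ odd n) :
  [/\ (forall z : 'S_(n - 2), fpf z -> fpf (rho z)),
      (forall y : 'S_n, Y1 y -> fpf y),
      (forall z1 z2 : 'S_(n - 2), fpf z1 -> fpf z2 -> rho z1 = rho z2 -> z1 = z2)
    & (forall z1 z2 : 'S_(n - 2), fbruhat z1 z2 -> fbruhat (rho z1) (rho z2))].
Proof.
have hn2 : 2 <= n by lia.
have [a [b [ha hb hs]]] := s_lastE hn2.
have P1 : forall z : 'S_(n - 2), fpf z -> fpf (rho z).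
  by move=> z fz; rewrite (rhoE z hs); apply: fpf_conj; exact: fpf_u.
have hab : n - 2 <= val a /\ n - 2 <= val b by rewrite ha hb; lia.
split => //.
- by move=> y [z fz ->]; exact: P1.
- move=> z1 z2 _ _; rewrite !(rhoE _ hs) => /conjg_inj /mulgI; exact: ext_inj.
move=> z1 z2 [f1 f2 crt]; split; try exact: P1.
elim: crt => [x y [fx [i [j [ij [-> hl]]]]] | x | x y w _ IH1 _ IH2].
- apply: rt_step; split; first exact: P1.
  exists (w0 n (widen_ord (leq_subr 2 n) i)), (w0 n (widen_ord (leq_subr 2 n) j)).
  split; last split.
  + by apply: contra ij => /eqP /(inv_inj (w0K n)) /wid_inj ->.
  + rewrite !(rhoE _ hs) !ext_morph ext_tperm -tpermJ -!conjMg; congr (_ ^ _).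
    have c : tperm a b * tperm (widen_ord (leq_subr 2 n) i) (widen_ord (leq_subr 2 n) j)
      = tperm (widen_ord (leq_subr 2 n) i) (widen_ord (leq_subr 2 n) j) * tperm a b.
      by rewrite -ext_tperm s_ext_comm //; case: hab.
    by rewrite !mulgA c.
  + by rewrite !(rhoE _ hs) !len_w0 !(len_u _ hn2 ha hb).
- exact: rt_refl.
- exact: rt_trans IH1 IH2.
Qed.
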